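(* Let $k$ be an infinite field, $n\ge2$, and let $<$ be a product order on $k[X_1,\ldots,X_n]$ with $X_1<\cdots<X_n$. Let $A\subseteq k^n$ be a finite union of pairwise distinct affine $d$-planes such that for each irreducible component $A'$ of $A$, the index $1$ is not among the indices of the minimal free variables of $A'$ (equivalently, $X_1$ is constant on each component). Let $Y=\{a_1;\ a\in A\}\subseteq k$ (a finite set), and for $\lambda\in Y$ let $A_\lambda=\{a'\in k^{n-1};\ (\lambda,a')\in A\}$ and $D(A_\lambda)\subseteq\mathbb{N}^{n-1}$ its standard set with respect to the restriction of $<$ to $k[X_2,\ldots,X_n]$, identified with $\{0\}\times D(A_\lambda)\subseteq\mathbb{N}^n$. Then $$D(A)=\sum_{\lambda\in Y}D(A_\lambda),$$ i.e. $D(A)=\{\beta\in\mathbb{N}^n;\ \beta_1<\#\{\lambda\in Y;\ p(\beta)\in D(A_\lambda)\}\}$.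
   Context: $p:\mathbb{N}^n\to\mathbb{N}^{n-1}$, $(\alpha_1,\ldots,\alpha_n)\mapsto(\alpha_2,\ldots,\alpha_n)$. A term order $<$ on $k[X_1,\ldots,X_n]$ is a product order if for all $\alpha,\beta\in\mathbb{N}^n$: $\alpha<\beta$ iff either $p(\alpha)<p(\beta)$, or $p(\alpha)=p(\beta)$ and $\alpha_1<\beta_1$. For $A\subseteq k^m$, $I(A)$ is the ideal of polynomials vanishing on $A$, ${\rm LE}(f)$ the leading exponent, $C(A)=\{{\rm LE}(f);\ 0\ne f\in I(A)\}$, and $D(A)=\mathbb{N}^m\setminus C(A)$. Addition of standard sets: let $\overline{\mathbb{D}}_n$ be the set of subsets $\delta\subseteq\mathbb{N}^n$ whose complement is closed under adding elements of $\mathbb{N}^n$ and which do not contain $\mathbb{N}e_1$; for $\delta,\delta'\in\overline{\mathbb{D}}_n$, $\delta+\delta'=\{\beta\in\mathbb{N}^n;\ p(\beta)\in p(\delta)\cup p(\delta'),\ \beta_1<\#(p^{-1}(p(\beta))\cap\delta)+\#(p^{-1}(p(\beta))\cap\delta')\}$; this is commutative and associative, so finite sums are defined; for sets of the form $\{0\}\times\epsilon_\lambda$ the finite sum equals $\{\beta;\ \beta_1<\#\{\lambda;\ p(\beta)\in\epsilon_\lambda\}\}$. An affine $d$-plane is a translate of a $d$-dimensional linear subspace; for $\#J=d$, $\{X_j;\ j\in J\}$ is a set of free variables of an affine $d$-plane $A'$ if the projection $A'\to k^J$ is bijective, and minimal if moreover no exchange of some $j\in J$ by some $i\notin J$ with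 $i<j$ yields a set of free variables. *)

(* Defs.v *)
From HB Require Import structures.
From mathcomp Require Import all_boot all_order all_algebra.
Set Implicit Arguments. Unset Strict Implicit. Unset Printing Implicit Defensive.
Import GRing.Theory.
Local Open Scope ring_scope.

Definition expo (m : nat) := {ffun 'I_m -> nat}.

Definition eadd m (a b : expo m) : expo m := [ffun i => (a i + b i)%N].
Definition eunit m (i : 'I_m) : expo m := [ffun j => nat_of_bool (j == i)].

Definition proj n (a : expo n.+1) : expo n := [ffun i : 'I_n => a (lift ord0 i)].
Definition cons0 n (g : expo n) : expo n.+1 :=
  [ffun i => if unlift ord0 i is Some j then g j else 0%N].

Definition term_order m (lt : rel (expo m)) : Prop :=
  [/\ irreflexive lt, transitive lt,
      (forall a b, a != b -> lt a b || lt b a),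
      (forall a b c, lt a b -> lt (eadd a c) (eadd b c))
    & well_founded (fun a b => lt a b)].

Definition restr n (lt : rel (expo n.+1)) : rel (expo n) :=
  fun g h => lt (cons0 g) (cons0 h).

Definition product_order n (lt : rel (expo n.+1)) : Prop :=
  forall a b, lt a b = restr lt (proj a) (proj b) || ((proj a == proj b) && (a ord0 < b ord0)%N).

Record mpoly (K : fieldType) (m : nat) := MPoly {
  coef : expo m -> K;
  supp : seq (expo m);
  supp_ok : forall a, coef a != 0 -> a \in supp }.

Definition meval (K : fieldType) m (f : mpoly K m) (x : 'rV[K]_m) : K :=
  \sum_(a <- undup (supp f)) coef f a * \prod_(i < m) x 0 i ^+ a i.

Definition mpoly_nonzero (K : fieldType) m (f : mpoly K m) := exists a, coef f a != 0.

Definition is_LE (K : fieldType) m (lt : rel (expo m)) (f : mpoly K m) (b : expo m) :=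
  coef f b != 0 /\ forall a, coef f a != 0 -> a = b \/ lt a b.

Definition vanishes (K : fieldType) m (f : mpoly K m) (A : 'rV[K]_m -> Prop) :=
  forall x, A x -> meval f x = 0.

Definition Cset (K : fieldType) m (lt : rel (expo m)) (A : 'rV[K]_m -> Prop) (b : expo m) :=
  exists f : mpoly K m, [/\ mpoly_nonzero f, vanishes f A & is_LE lt f b].
Definition Dset (K : fieldType) m (lt : rel (expo m)) (A : 'rV[K]_m -> Prop) (b : expo m) :=
  ~ Cset lt A b.

(** Affine d-plane {a + u B}, B of full row rank d. *)
Definition in_plane (K : fieldType) m d (a : 'rV[K]_m) (B : 'M[K]_(d, m)) (x : 'rV[K]_m) :=
  exists u : 'rV[K]_d, x = a + u *m B.

Definition free_vars (K : fieldType) m d (a : 'rV[K]_m) (B : 'M[K]_(d, m)) (J : {set 'I_m}) :=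
  #|J| = d /\
  forall y : 'rV[K]_m, exists! x, in_plane a B x /\ forall j, j \in J -> x 0 j = y 0 j.

Definition min_free_vars (K : fieldType) m d (a : 'rV[K]_m) (B : 'M[K]_(d, m)) (J : {set 'I_m}) :=
  free_vars a B J /\
  forall j i : 'I_m, j \in J -> i \notin J -> (i < j)%N -> ~ free_vars a B ((J :\ j) :|: [set i]).

Definition cons_pt (K : fieldType) n (l : K) (x : 'rV[K]_n) : 'rV[K]_n.+1 :=
  \row_i (if unlift ord0 i is Some j then x 0 j else l).

Definition fiber (K : fieldType) n (A : 'rV[K]_n.+1 -> Prop) (l : K) : 'rV[K]_n -> Prop :=
  fun x => A (cons_pt l x).

Definition card_prop (T : eqType) (P : T -> Prop) (N : nat) :=
  exists t : seq T, [/\ uniq t, (forall x, x \in t <-> P x) & size t = N].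

(* Main.v *)
Require Import Defs.
From Stdlib Require Import Classical ClassicalEpsilon.
From HB Require Import structures.
From mathcomp Require Import all_boot all_order all_algebra.
Set Implicit Arguments. Unset Strict Implicit. Unset Printing Implicit Defensive.
Import GRing.Theory.
Local Open Scope ring_scope.

Definition mono (K : fieldType) m (a : expo m) (x : 'rV[K]_m) : K :=
  \prod_(i < m) x 0 i ^+ a i.

Lemma sum_supp (K : fieldType) (T : eqType) (F : T -> K) (P : pred T) (s1 s2 : seq T) :
  uniq s1 -> uniq s2 -> (forall a, P a -> a \in s1) -> (forall a, P a -> a \in s2) ->
  (forall a, ~~ P a -> F a = 0) -> \sum_(a <- s1) F a = \sum_(a <- s2) F a.
Proof.
move=> u1 u2 h1 h2 h0.
have e : forall s, \sum_(a <- s) F a = \sum_(a <- s | P a) F a.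
  by move=> s; rewrite [RHS]big_mkcond; apply: eq_bigr => a _; case: ifP => // /negbT /h0.
transitivity (\sum_(a <- s1 | P a) F a); first exact: e.
transitivity (\sum_(a <- s2 | P a) F a); last by rewrite e.
rewrite -big_filter -[in RHS]big_filter; apply: perm_big; apply: uniq_perm; rewrite ?filter_uniq //.
move=> a; rewrite !mem_filter; case Pa: (P a) => //=.
by rewrite h1 ?h2.
Qed.

Lemma meval_cover (K : fieldType) m (f : mpoly K m) (s : seq (expo m)) x :
  uniq s -> (forall a, coef f a != 0 -> a \in s) ->
  meval f x = \sum_(a <- s) coef f a * mono a x.
Proof.
move=> us hs; rewrite /meval; apply: (sum_supp (P := fun a => coef f a != 0)).
- exact: undup_uniq.
- exact: us.
- by move=> a /supp_ok; rewrite mem_undup.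
- exact: hs.
- by move=> a; rewrite negbK => /eqP ->; rewrite mul0r.
Qed.

Lemma sum_neq0 (K : fieldType) (T : eqType) (r : seq T) (P : pred T) (F : T -> K) :
  \sum_(i <- r | P i) F i != 0 -> exists i, [/\ i \in r, P i & F i != 0].
Proof.
move=> h; apply: NNPP => hn; move/negP: h; apply; apply/eqP; apply: big1_seq.
move=> i /andP[Pi ir]; apply/eqP; apply: contraT => Fi; case: hn; by exists i.
Qed.

Definition conse n (j : nat) (d : expo n) : expo n.+1 :=
  [ffun i => if unlift ord0 i is Some k then d k else j].

Lemma conse0 n j (d : expo n) : conse j d ord0 = j.
Proof. by rewrite ffunE unlift_none. Qed.
Lemma proj_conse n j (d : expo n) : proj (conse j d) = d.
Proof. by apply/ffunP=> i; rewrite !ffunE liftK. Qed.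
Lemma conse_eta n (a : expo n.+1) : conse (a ord0) (proj a) = a.
Proof.
apply/ffunP=> i; rewrite ffunE; case: unliftP => [k ->|->] //.
by rewrite ffunE.
Qed.
Lemma conse_inj n j j' (d d' : expo n) : conse j d = conse j' d' -> j = j' /\ d = d'.
Proof.
move=> h; split; first by rewrite -(conse0 j d) h conse0.
by rewrite -(proj_conse j d) h proj_conse.
Qed.

Lemma madd_ok (K : fieldType) m (f g : mpoly K m) a :
  coef f a + coef g a != 0 -> a \in supp f ++ supp g.
Proof.
move=> h; rewrite mem_cat.
case: (eqVneq (coef f a) 0) => [e|/supp_ok -> //].
by move: h; rewrite e add0r => /supp_ok ->; rewrite orbT.
Qed.
Definition madd (K : fieldType) m (f g : mpoly K m) : mpoly K m :=
  @MPoly K m (fun a => coef f a + coef g a) (supp f ++ supp g) (@madd_ok K m f g).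

Lemma mzero_ok (K : fieldType) m (a : expo m) : (0:K) != 0 -> a \in [::].
Proof. by rewrite eqxx. Qed.
Definition mzero (K : fieldType) m : mpoly K m := @MPoly K m (fun _ => 0) [::] (@mzero_ok K m).

Lemma mscale_ok (K : fieldType) m (c : K) (f : mpoly K m) a : c * coef f a != 0 -> a \in supp f.
Proof. by rewrite mulf_eq0 negb_or => /andP[_ /supp_ok]. Qed.
Definition mscale (K : fieldType) m (c : K) (f : mpoly K m) : mpoly K m :=
  @MPoly K m (fun a => c * coef f a) (supp f) (@mscale_ok K m c f).

Lemma mmono_ok (K : fieldType) m (g : expo m) a : ((a == g)%:R : K) != 0 -> a \in [:: g].
Proof. move=> h; rewrite inE; apply: contraR h => /negbTE ->; by rewrite /= mulr0n eqxx. Qed.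
Definition mmono (K : fieldType) m (g : expo m) : mpoly K m :=
  @MPoly K m (fun a => (a == g)%:R) [:: g] (@mmono_ok K m g).

Lemma mtensor_ok (K : fieldType) n (P : {poly K}) (h : mpoly K n) (a : expo n.+1) :
  P`_(a ord0) * coef h (proj a) != 0 ->
  a \in [seq conse j d | j <- iota 0 (size P), d <- undup (supp h)].
Proof.
rewrite mulf_eq0 negb_or => /andP[hP /supp_ok hh].
rewrite -(conse_eta a); apply: allpairs_f; last by rewrite mem_undup.
rewrite mem_iota add0n /=; apply: contraR hP; rewrite -leqNgt => hs.
by rewrite nth_default.
Qed.
Definition mtensor (K : fieldType) n (P : {poly K}) (h : mpoly K n) : mpoly K n.+1 :=
  @MPoly K n.+1 (fun a => P`_(a ord0) * coef h (proj a))
   [seq conse j d | j <- iota 0 (size P), d <- undup (supp h)] (@mtensor_ok K n P h).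

Definition msum (K : fieldType) m (l : seq (mpoly K m)) : mpoly K m :=
  foldr (@madd K m) (mzero K m) l.

Lemma coef_msum (K : fieldType) m (l : seq (mpoly K m)) a :
  coef (msum l) a = \sum_(f <- l) coef f a.
Proof. by elim: l => [|f l IH]; rewrite ?big_nil ?big_cons //= IH. Qed.

Lemma meval_add (K : fieldType) m (f g : mpoly K m) x :
  meval (madd f g) x = meval f x + meval g x.
Proof.
have cov : forall h : mpoly K m, (forall a, coef h a != 0 -> a \in supp f ++ supp g) ->
   meval h x = \sum_(a <- undup (supp f ++ supp g)) coef h a * mono a x.
  by move=> h hh; apply: meval_cover; rewrite ?undup_uniq // => a /hh; rewrite mem_undup.
rewrite (cov (madd f g)); last exact: supp_ok.
rewrite (cov f); last by move=> a /supp_ok; rewrite mem_cat => ->.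
rewrite (cov g); last by move=> a /supp_ok; rewrite mem_cat => ->; rewrite orbT.
by rewrite -big_split /=; apply: eq_bigr => a _; rewrite mulrDl.
Qed.

Lemma meval_zero (K : fieldType) m x : meval (mzero K m) x = 0.
Proof. by rewrite /meval big_nil. Qed.

Lemma meval_msum (K : fieldType) m (l : seq (mpoly K m)) x :
  meval (msum l) x = \sum_(f <- l) meval f x.
Proof. by elim: l => [|f l IH]; rewrite ?big_nil ?big_cons /= ?meval_zero // meval_add IH. Qed.

Lemma meval_scale (K : fieldType) m c (f : mpoly K m) x :
  meval (mscale c f) x = c * meval f x.
Proof. by rewrite /meval /= big_distrr; apply: eq_bigr => a _; rewrite /= mulrA. Qed.

Lemma meval_mono (K : fieldType) m (g : expo m) x : meval (mmono K g) x = mono g x.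
Proof. by rewrite /meval /= big_cons big_nil eqxx mul1r addr0. Qed.

Lemma mono_cons (K : fieldType) n (a : expo n.+1) (t : K) (x : 'rV[K]_n) :
  mono a (cons_pt t x) = t ^+ a ord0 * mono (proj a) x.
Proof.
rewrite /mono big_ord_recl !mxE unlift_none; congr (_ * _).
by apply: eq_bigr => i _; rewrite !mxE liftK ffunE.
Qed.

Lemma meval_tensor (K : fieldType) n (P : {poly K}) (h : mpoly K n) t x :
  meval (mtensor P h) (cons_pt t x) = P.[t] * meval h x.
Proof.
rewrite (meval_cover _ (s := [seq conse j d | j <- iota 0 (size P), d <- undup (supp h)])).
  have -> : iota 0 (size P) = index_iota 0 (size P) by rewrite /index_iota subn0.
  rewrite big_allpairs_dep /= horner_coef big_distrl /= big_mkord.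
  apply: eq_bigr => j _; rewrite /meval big_distrr /=; apply: eq_bigr => d _.
  rewrite mono_cons conse0 proj_conse; by rewrite mulrACA.
- apply: allpairs_uniq; rewrite ?iota_uniq ?undup_uniq //.
  by move=> [j d] [j' d'] _ _ /= /conse_inj [-> ->].
- exact: supp_ok.
Qed.

Lemma mevalE (K : fieldType) m (f : mpoly K m) x :
  meval f x = \sum_(a <- undup (supp f)) coef f a * mono a x.
Proof. by []. Qed.

Definition sl_coef (K : fieldType) n (f : mpoly K n.+1) (t : K) (d : expo n) : K :=
  \sum_(a <- undup (supp f) | proj a == d) coef f a * t ^+ a ord0.

Lemma mslice_ok (K : fieldType) n (f : mpoly K n.+1) (t : K) (d : expo n) :
  sl_coef f t d != 0 -> d \in map (@proj n) (supp f).
Proof.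
move=> /sum_neq0 [a [ain /eqP <- _]]; apply: map_f; by rewrite -mem_undup.
Qed.

Definition mslice (K : fieldType) n (f : mpoly K n.+1) (t : K) : mpoly K n :=
  @MPoly K n (sl_coef f t) (map (@proj n) (supp f)) (@mslice_ok K n f t).

Lemma meval_slice (K : fieldType) n (f : mpoly K n.+1) (t : K) x :
  meval (mslice f t) x = meval f (cons_pt t x).
Proof.
rewrite !mevalE /= /sl_coef.
under eq_bigr => d _ do rewrite big_distrl big_mkcond /=.
rewrite exchange_big /=; apply: eq_big_seq => a aS.
have ain : proj a \in undup (map (@proj n) (supp f)).
  by rewrite mem_undup; apply: map_f; rewrite -mem_undup.
rewrite (bigD1_seq (proj a)) ?undup_uniq //= eqxx big1 ?addr0.
  by rewrite mono_cons mulrA.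
by move=> d /negbTE; rewrite eq_sym => ->.
Qed.

Definition cpoly (K : fieldType) n (f : mpoly K n.+1) (b1 : nat) (g : expo n) : {poly K} :=
  \poly_(j < b1.+1) coef f (conse j g).

Lemma slice_coef_eq (K : fieldType) n (f : mpoly K n.+1) b1 g t :
  (forall j, coef f (conse j g) != 0 -> (j <= b1)%N) ->
  coef (mslice f t) g = (cpoly f b1 g).[t].
Proof.
move=> hb; rewrite horner_poly /= /sl_coef.
pose G j := coef f (conse j g) * t ^+ j.
transitivity (\sum_(a <- [seq x <- undup (supp f) | proj x == g]) G (a ord0)).
  rewrite -[LHS]big_filter; apply: eq_big_seq => a; rewrite mem_filter => /andP[/eqP pa _].
  by rewrite /G -{1}(conse_eta a) pa.
rewrite -(big_map (fun a : expo n.+1 => a ord0) xpredT).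
have -> : \sum_(i < b1.+1) coef f (conse i g) * t ^+ i = \sum_(j <- iota 0 b1.+1) G j.
  have e : iota 0 b1.+1 = index_iota 0 b1.+1 by rewrite /index_iota subn0.
  by rewrite e big_mkord.
apply: (sum_supp (P := fun j => coef f (conse j g) != 0)).
- rewrite map_inj_in_uniq ?filter_uniq ?undup_uniq //.
  move=> a b; rewrite !mem_filter => /andP[/eqP pa _] /andP[/eqP pb _] e.
  by rewrite -(conse_eta a) -(conse_eta b) e pa pb.
- exact: iota_uniq.
- move=> j hj; apply/mapP; exists (conse j g); last by rewrite conse0.
  by rewrite mem_filter proj_conse eqxx mem_undup; apply: supp_ok.
- by move=> j /hb hj; rewrite mem_iota add0n ltnS.
- by move=> j; rewrite negbK /G => /eqP ->; rewrite mul0r.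
Qed.

Lemma dir1 (K : fieldType) n (lt : rel (expo n.+1)) (A : 'rV[K]_n.+1 -> Prop) beta :
  term_order lt -> product_order lt -> Cset lt A beta ->
  forall s : seq K, uniq s ->
  (forall l, l \in s -> Dset (restr lt) (fiber A l) (proj beta)) ->
  (size s <= beta ord0)%N.
Proof.
move=> [irr _ _ _ _] po [f [[a0 nz] van [fb fle]]] s us hs.
set g := proj beta; set b1 := beta ord0.
have hb : forall j, coef f (conse j g) != 0 -> (j <= b1)%N.
  move=> j /fle [e | l].
    by rewrite /b1 -e conse0.
  move: l; rewrite po proj_conse conse0 /restr irr /= eqxx /= => /ltnW //.
have cnz : cpoly f b1 g != 0.
  apply: contraNneq fb => c0.
  have := congr1 (fun p : {poly K} => p`_b1) c0.
  by rewrite coef_poly ltnSn /b1 /g conse_eta coef0 => ->.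
have roots : all (root (cpoly f b1 g)) s.
  apply/allP => l ls; apply: contraT => hr.
  case: (hs l ls); exists (mslice f l); split.
  - by exists g; rewrite (slice_coef_eq _ hb).
  - by move=> x hx; rewrite meval_slice; apply: van.
  - split; first by rewrite (slice_coef_eq _ hb).
    move=> d /sum_neq0 [a [ain /eqP pa]]; rewrite mulf_eq0 negb_or => /andP[ha _].
    case: (fle a ha) => [ea | la]; first by left; rewrite -pa ea.
    move: la; rewrite po -/g pa => /orP[-> | /andP[/eqP -> _]]; by [right | left].
have := max_poly_roots cnz roots us.
move/leq_trans => /(_ _ (size_poly _ _)); by rewrite ltnS.
Qed.

Lemma cons_pt_eta (K : fieldType) n (x : 'rV[K]_n.+1) :
  cons_pt (x 0 ord0) (\row_i x 0 (lift ord0 i)) = x.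
Proof.
apply/rowP => i; rewrite !mxE; case: unliftP => [j ->|->] //.
by rewrite mxE.
Qed.

Lemma lagrange (K : fieldType) (R : seq K) l l' : uniq R -> l \in R -> l' \in R ->
  ((\prod_(m <- R | m != l) ('X - m%:P)) *
     ((\prod_(m <- R | m != l) (l - m))^-1)%:P).[l'] = (l' == l)%:R.
Proof.
move=> uR lR l'R; rewrite hornerM hornerC horner_prod.
under eq_bigr do rewrite hornerXsubC.
case: eqP => [-> | ne].
  rewrite mulfV //; rewrite prodf_seq_neq0; apply/allP => m _; apply/implyP.
  by rewrite subr_eq0 eq_sym.
rewrite -big_filter (bigD1_seq l') ?filter_uniq ?mem_filter //=.
  by rewrite subrr !mul0r.
by rewrite l'R andbT; apply/eqP.
Qed.

Lemma dir2 (K : fieldType) n (lt : rel (expo n.+1)) (A : 'rV[K]_n.+1 -> Prop) beta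
    (ys : seq K) (M : seq K) :
  product_order lt ->
  (forall x, A x -> x 0 ord0 \in ys) -> uniq M ->
  (forall l, l \in ys -> l \notin M -> Cset (restr lt) (fiber A l) (proj beta)) ->
  (size M <= beta ord0)%N -> Cset lt A beta.
Proof.
move=> po hY uM hC hM.
set g := proj beta; set b1 := beta ord0.
set R := [seq l <- undup ys | l \notin M].
have uR : uniq R by rewrite filter_uniq ?undup_uniq.
have memR : forall l, l \in R = (l \in ys) && (l \notin M).
  by move=> l; rewrite mem_filter mem_undup andbC.
have [G HG] : exists G : K -> mpoly K n, forall l, l \in R ->
    [/\ mpoly_nonzero (G l), vanishes (G l) (fiber A l) & is_LE (restr lt) (G l) g].
  exists (fun l => match excluded_middle_informative (Cset (restr lt) (fiber A l) g) with
     | left H => proj1_sig (constructive_indefinite_description _ H)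
     | right _ => mzero K n end).
  move=> l; rewrite memR => /andP[ly lM].
  case: excluded_middle_informative => [H|H]; last by case: H; apply: hC.
  exact: (proj2_sig (constructive_indefinite_description _ H)).
pose g' l := mscale (coef (G l) g)^-1 (G l).
have g'g : forall l, l \in R -> coef (g' l) g = 1.
  move=> l /HG [_ _ [h _]]; by rewrite /= mulVf.
pose u : {poly K} := 'X^(b1 - size M) * \prod_(m <- M) ('X - m%:P).
have umon : u \is monic by rewrite monicMl ?monicXn ?monic_prod_XsubC.
have usz : size u = b1.+1.
  rewrite size_Mmonic ?monic_prod_XsubC ?size_polyXn ?size_prod_XsubC //.
    by rewrite addSn addnS /= subnK.
  by rewrite monic_neq0 ?monicXn.
have ub1 : u`_b1 = 1.
  by move/monicP: umon; rewrite lead_coefE usz.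
pose L l : {poly K} := (\prod_(m <- R | m != l) ('X - m%:P)) *
     ((\prod_(m <- R | m != l) (l - m))^-1)%:P.
pose f := madd (mtensor u (mmono K g))
   (msum [seq mtensor (u * L l) (madd (g' l) (mscale (-1) (mmono K g))) | l <- R]).
have coefE : forall a, coef f a = u`_(a ord0) * (proj a == g)%:R +
    \sum_(l <- R) (u * L l)`_(a ord0) * (coef (g' l) (proj a) + -1 * (proj a == g)%:R).
  by move=> a; rewrite /f /= coef_msum big_map.
have coefg : forall a, proj a = g -> coef f a = u`_(a ord0).
  move=> a pa; rewrite coefE pa eqxx mulr1 big1_seq ?addr0 // => l /andP[_ lR].
  by rewrite g'g // mulN1r subrr mulr0.
exists f; split.
- by exists beta; rewrite coefg // ub1 oner_neq0.
- move=> x Ax; rewrite -(cons_pt_eta x).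
  set lam := x 0 ord0; set x' := \row_i x 0 (lift ord0 i).
  have fx : fiber A lam x' by rewrite /fiber /lam /x' cons_pt_eta.
  rewrite /f meval_add meval_tensor meval_msum big_map meval_mono.
  under eq_bigr do rewrite meval_tensor meval_add meval_scale meval_mono hornerM.
  case: (boolP (lam \in M)) => lM.
    have u0 : u.[lam] = 0.
      by rewrite hornerM horner_prod (bigD1_seq lam) //= hornerXsubC subrr mul0r mulr0.
    by rewrite u0 mul0r add0r big1 // => l _; rewrite !mul0r.
  have lR : lam \in R by rewrite memR lM andbT /lam hY.
  rewrite (bigD1_seq lam) //= big1_seq ?addr0; last first.
    move=> l /andP[/negbTE nl lR']; rewrite /L lagrange //.
    by rewrite eq_sym nl mulr0 mul0r.
  rewrite /L lagrange // eqxx /= mulr1n mulr1 /g' meval_scale.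
  have [_ v _] := HG _ lR; rewrite (v _ fx) mulr0 mulN1r add0r.
  by rewrite -mulrDr subrr mulr0.
- split; first by rewrite coefg // ub1 oner_neq0.
  move=> a; case: (eqVneq (proj a) g) => [pa | pa].
    rewrite coefg // => ha.
    have : (a ord0 < b1.+1)%N.
      by rewrite -usz; apply: contraNT ha; rewrite -leqNgt => hs; rewrite nth_default.
    rewrite ltnS leq_eqVlt => /orP[/eqP e | l].
      by left; rewrite -(conse_eta a) -(conse_eta beta) e pa.
    by right; rewrite po pa -/g eqxx l orbT.
  rewrite coefE (negbTE pa) mulr0 add0r mulr0 => /sum_neq0 [l [lR _]].
  rewrite addr0 mulf_eq0 negb_or => /andP[_]; rewrite /= mulf_eq0 negb_or => /andP[_ hG].
  have [_ _ [_ le]] := HG _ lR.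
  case: (le _ hG) => [e | rl]; first by rewrite e eqxx in pa.
  by right; rewrite po rl.
Qed.

Lemma colsub_mul (K : fieldType) m d p (e : 'I_p -> 'I_m) (B : 'M[K]_(d, m)) (w : 'rV[K]_d) k :
  (w *m colsub e B) 0 k = (w *m B) 0 (e k).
Proof. by rewrite !mxE; apply: eq_bigr => i _; rewrite mxE. Qed.

Lemma free_of_unit (K : fieldType) m d (a : 'rV[K]_m) (B : 'M[K]_(d, m)) (e : 'I_d -> 'I_m) :
  injective e -> colsub e B \in unitmx -> free_vars a B (e @: [set: 'I_d]).
Proof.
move=> ei ue; split; first by rewrite card_imset // cardsT card_ord.
move=> y; set BJ := colsub e B.
set z : 'rV_d := \row_k (y 0 (e k) - a 0 (e k)).
have hz : forall k, ((z *m invmx BJ) *m B) 0 (e k) = z 0 k.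
  by move=> k; rewrite -colsub_mul mulmxKV.
exists (a + (z *m invmx BJ) *m B); split.
  split; first by exists (z *m invmx BJ).
  move=> j /imsetP [k _ ->]; rewrite mxE hz mxE.
  by rewrite addrC subrK.
move=> x' [[u' ->] hx'].
have hu : u' *m BJ = z.
  apply/rowP => k; rewrite colsub_mul [RHS]mxE.
  have := hx' (e k) (imset_f _ (in_setT k)); rewrite mxE.
  by move/(congr1 (fun v => v - a 0 (e k))); rewrite addrC addrK.
by rewrite -hu mulmxK.
Qed.

Lemma unit_of_free (K : fieldType) m d (a : 'rV[K]_m) (B : 'M[K]_(d, m)) J (e : 'I_d -> 'I_m) :
  row_free B -> free_vars a B J -> (forall j, j \in J -> exists k, e k = j) ->
  colsub e B \in unitmx.
Proof.
move=> rf [_ hu] se; rewrite unitmxE unitfE; apply/negP => /det0P [w wnz wz].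
have [x [_ ux]] := hu a.
have e1 := ux a (conj (ex_intro _ 0 (esym (etrans (congr1 _ (mul0mx _ _)) (addr0 _)))) (fun _ _ => erefl)).
have e2 : x = a + w *m B.
  apply: ux; split; first by exists w.
  move=> j /se [k <-]; rewrite mxE -colsub_mul wz mxE addr0.
  done.
have : w *m B = 0 *m B.
  by rewrite mul0mx; apply: (addrI a); rewrite -e2 e1 addr0.
by move/(row_free_inj rf) => w0; rewrite w0 eqxx in wnz.
Qed.

Lemma enumJ m d (J : {set 'I_m}) : #|J| = d ->
  exists e : 'I_d -> 'I_m, [/\ injective e, forall k, e k \in J & forall j, j \in J -> exists k, e k = j].
Proof.
move=> <-; exists (fun k => enum_val k); split.
- exact: enum_val_inj.
- by move=> k; apply: enum_valP.
- by move=> j jJ; exists (enum_rank_in jJ j); rewrite enum_rankK_in.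
Qed.

Lemma exists_free (K : fieldType) m d (a : 'rV[K]_m) (B : 'M[K]_(d, m)) :
  row_free B -> exists J, free_vars a B J.
Proof.
move=> rf; have hr : \rank B^T = d by rewrite mxrank_tr; apply/eqP.
move: (maxrowsub_free B^T) (@maxrankfun_inj _ _ _ B^T) hr.
move: (maxrankfun B^T); generalize (\rank B^T) => r' f ffree finj hr; subst r'.
exists (f @: [set: 'I_d]); apply: free_of_unit => //.
by rewrite -unitmx_tr trmx_mxsub -row_free_unit.
Qed.

Lemma exchange (K : fieldType) m d (a : 'rV[K]_m.+1) (B : 'M[K]_(d, m.+1)) J :
  row_free B -> free_vars a B J -> ord0 \notin J -> (exists k0, B k0 ord0 != 0) ->
  exists2 j, j \in J & free_vars a B (J :\ j :|: [set ord0]).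
Proof.
move=> rf hf h0 [k0 hk0].
have [e [ei eJ se]] := enumJ (proj1 hf).
have uJ := unit_of_free rf hf se.
set BJ := colsub e B in uJ.
pose v := invmx BJ *m col ord0 B.
have cv : col ord0 B = BJ *m v by rewrite mulKVmx.
have [k vk] : exists k, v k 0 != 0.
  apply: NNPP => hn; move/eqP: hk0; apply.
  have := congr1 (fun M : 'cV[K]_d => M k0 0) cv; rewrite !mxE => ->.
  apply: big1 => i _; case: (eqVneq (v i 0) 0) => [-> | h]; first by rewrite mulr0.
  by case: hn; exists i.
pose e' := fun i => if i == k then ord0 else e i.
have e'i : injective e'.
  move=> i i'; rewrite /e'; case: eqP => [-> | ni]; case: eqP => [-> | ni'] //.
  - by move=> h; move: (eJ i'); rewrite -h (negbTE h0).
  - by move=> h; move: (eJ i); rewrite h (negbTE h0).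
  - exact: ei.
have ue' : colsub e' B \in unitmx.
  rewrite unitmxE unitfE; apply/negP => /det0P [w wnz wz].
  set p := w *m BJ.
  have pk : forall i, i != k -> p 0 i = 0.
    move=> i ik; rewrite /p colsub_mul.
    have := congr1 (fun M : 'rV[K]_d => M 0 i) wz; rewrite colsub_mul /e' (negbTE ik) => ->.
    by rewrite mxE.
  have w0 : (w *m B) 0 ord0 = 0.
    by have := congr1 (fun M : 'rV[K]_d => M 0 k) wz; rewrite colsub_mul /e' eqxx => ->; rewrite mxE.
  have wB : (w *m B) 0 ord0 = p 0 k * v k 0.
    transitivity ((w *m col ord0 B) 0 0).
      by rewrite !mxE; apply: eq_bigr => i _; rewrite mxE.
    rewrite cv mulmxA -/p mxE (bigD1 k) //= big1 ?addr0 // => i ik.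
    by rewrite pk // mul0r.
  have pk0 : p 0 k = 0.
    by move: w0; rewrite wB => /eqP; rewrite mulf_eq0 (negbTE vk) orbF => /eqP.
  have p0 : p = 0.
    apply/rowP => i; rewrite [RHS]mxE; case: (eqVneq i k) => [-> // | ik]; exact: pk.
  have : w = 0 by rewrite -(mulmxK uJ w) -/p p0 mul0mx.
  by move=> w00; rewrite w00 eqxx in wnz.
exists (e k); first exact: eJ.
have -> : J :\ e k :|: [set ord0] = e' @: [set: 'I_d].
  apply/setP => i; rewrite !inE; apply/idP/imsetP.
  - case/orP => [/andP [ik iJ] | /eqP ->].
      have [k' ek'] := se _ iJ; exists k' => //.
      rewrite /e'; case: eqP => [ekk | //]; by rewrite -ek' ekk eqxx in ik.
    by exists k; rewrite ?inE /e' ?eqxx.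
  - move=> [i' _ ->]; rewrite /e'; case: ifP => [_ | /negbT ni]; first by rewrite eqxx orbT.
    by rewrite eJ andbT (inj_eq ei) ni.
exact: free_of_unit.
Qed.

Definition wt m (J : {set 'I_m}) : nat := (\sum_(i in J) (i : nat))%N.

Lemma wt_exch m (J : {set 'I_m}) (i j : 'I_m) :
  j \in J -> i \notin J -> (i < j)%N -> (wt (J :\ j :|: [set i]) < wt J)%N.
Proof.
move=> jJ iJ ij; rewrite /wt setUC big_setU1 /=; last by rewrite !inE (negbTE iJ) andbF.
by rewrite [X in (_ < X)%N](big_setD1 j jJ) /= ltn_add2r.
Qed.

Lemma plane_const (K : fieldType) m d (a : 'rV[K]_m.+1) (B : 'M[K]_(d, m.+1)) :
  row_free B -> (forall J, min_free_vars a B J -> ord0 \notin J) -> forall k0, B k0 ord0 = 0.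
Proof.
move=> rf hmin k0; apply: NNPP => hk.
have ex : exists k0, B k0 ord0 != 0 by exists k0; apply/eqP.
suff H : forall N J, (wt J < N)%N -> free_vars a B J -> False.
  have [J hJ] := exists_free a rf; exact: (H (wt J).+1 J (ltnSn _) hJ).
elim=> [//|N IH] J; rewrite ltnS => hw hJ.
case: (classic (min_free_vars a B J)) => hm.
  have h0 := hmin _ hm; have [j jJ hJ'] := exchange rf hJ h0 ex.
  apply: (IH _ _ hJ'); apply: leq_trans hw; apply: wt_exch => //.
  rewrite lt0n; apply: contraNneq h0 => e0; have -> : (ord0 : 'I_m.+1) = j by apply: val_inj.
  done.
have [j [i [jJ iJ ij hf]]] : exists j i, [/\ j \in J, i \notin J, (i < j)%N &
    free_vars a B (J :\ j :|: [set i])].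
  apply: NNPP => hn; apply: hm; split => // j i jJ iJ ij hf; apply: hn; exists j, i; done.
by apply: (IH _ _ hf); apply: leq_trans hw; apply: wt_exch.
Qed.

Unset Implicit Arguments.
Theorem mainTheorem5 (K : fieldType) (n : nat) (lt : rel (expo n.+1))
    (d r : nat) (a : 'I_r -> 'rV[K]_n.+1) (B : 'I_r -> 'M[K]_(d, n.+1)) :
  (~ exists s : seq K, forall x : K, x \in s) ->
  (0 < n)%N ->
  term_order lt -> product_order lt ->
  (forall i j : 'I_n.+1, (i < j)%N -> lt (eunit i) (eunit j)) ->
  (forall l, row_free (B l)) ->
  (forall l l' : 'I_r, l != l' ->
     ~ (forall x, in_plane (a l) (B l) x <-> in_plane (a l') (B l') x)) ->
  (forall (l : 'I_r) (J : {set 'I_n.+1}), min_free_vars (a l) (B l) J -> ord0 \notin J) ->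
  let A := fun x : 'rV[K]_n.+1 => exists l, in_plane (a l) (B l) x in
  let Y := fun lam : K => exists x, A x /\ x 0 ord0 = lam in
  forall beta : expo n.+1,
    Dset lt A beta <->
    exists N, card_prop (fun lam => Y lam /\ Dset (restr lt) (fiber A lam) (proj beta)) N
              /\ (beta ord0 < N)%N.
Proof.
move=> _ _ TO PO _ rf _ hmin A Y beta.
have col0 : forall l k, B l k ord0 = 0 := fun l => plane_const (rf l) (hmin l).
set ys := [seq a l 0 ord0 | l <- enum 'I_r].
have hY : forall x, A x -> x 0 ord0 \in ys.
  move=> x [l [u ->]]; rewrite !mxE big1 ?addr0; first by apply: map_f; rewrite mem_enum.
  by move=> i _; rewrite col0 mulr0.
have Yys : forall x, Y x <-> x \in ys.
  move=> x; split; first by move=> [y [Ay <-]]; apply: hY.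
  move=> /mapP [l _ ->]; exists (a l); split => //; exists l; exists 0.
  by rewrite mul0mx addr0.
split.
- move=> hD; apply: NNPP => hn; apply: hD.
  pose D l := Dset (restr lt) (fiber A l) (proj beta).
  pose pb l := if excluded_middle_informative (D l) then true else false.
  have pbP : forall l, pb l <-> D l.
    by move=> l; rewrite /pb; case: excluded_middle_informative.
  set M := [seq l <- undup ys | pb l].
  apply: (@dir2 K n lt A beta ys M PO hY).
  + by rewrite filter_uniq ?undup_uniq.
  + move=> l ly lM; apply: NNPP => hc.
    have : pb l by apply/pbP.
    by move=> pl; move: lM; rewrite mem_filter pl mem_undup ly.
  + rewrite leqNgt; apply/negP => hlt; apply: hn; exists (size M); split => //.
    exists M; split => //; first by rewrite filter_uniq ?undup_uniq.
    move=> x; rewrite mem_filter mem_undup Yys; split.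
      by move=> /andP [px xy]; split => //; apply/pbP.
    by move=> [xy /pbP px]; rewrite px.
- move=> [N [[s [us hs hsz]] hlt]] hC.
  have := dir1 TO PO hC us (fun l ls => proj2 (proj1 (hs l) ls)).
  by rewrite hsz leqNgt hlt.
Qed.
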